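(* Assume $\rho_1,\rho_2$ are strictly positive, $\rho_1(s,a)=\rho_1^{\mathcal S}(s)\pi_{b1}(a\mid s)$, $\gamma_1,\gamma_2\in[0,1)$, $\beta\ge0$, and $\|q_1^\star\|_\infty\le B_{Q1}$, $\|q_2^\star\|_\infty\le B_{Q2}$, $\|d^{P_2}_{\pi_2^\star,\rho_2}/\rho_2\|_\infty\le\kappa_2$, $\|d^{P_1}_{\mu,\rho_1}/\rho_1\|_\infty\le\kappa_1$, $\|d^{P_2}_{\pi_2^\star,\rho_2}/\rho_1\|_\infty\le\kappa_{12}$, $\|\mu/\pi_{b1}\|_\infty\le\kappa_{\mu\mid\pi_{b1}}$, $\|d^{P_2,\mathcal S}_{\pi_2^\star,\rho_2}/\rho_1^{\mathcal S}\|_\infty\le\kappa^{\mathcal S}_{12}$. Let $l_2^\star$, $l_{1,\rm mod}^\star$, $l_{1,\rm coup}^\star$ be the functions satisfying, for all $h$, $\langle l_2^\star,(I-\gamma_2P_2^{\pi_2^\star})h\rangle_{\rho_2}=\langle q_2^\star,h\rangle_{\rho_2}$; $\langle l_{1,\rm mod}^\star,(I-\gamma_1P_1^\mu)h\rangle_{\rho_1}=\langle q_1^\star,h\rangle_{\rho_1}$; $\langle l_{1,\rm coup}^\star,(I-\gamma_1P_1^\mu)h\rangle_{\rho_1}=\beta\langle q_1^\star,h\rangle_{\rho_1}+\langle l_2^\star,(I-\Pi_\mu)h\rangle_{\rho_2}$. Then these are uniquely determined and $$l_2^\star=\frac{(I-\gamma_2(P_2^{\pi_2^\star})^\top)^{-1}(\rho_2\odot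 q_2^\star)}{\rho_2},\quad l_{1,\rm mod}^\star=\frac{(I-\gamma_1(P_1^\mu)^\top)^{-1}(\rho_1\odot q_1^\star)}{\rho_1},$$ $$l_{1,\rm coup}^\star=\beta l_{1,\rm mod}^\star+l_{1,\rm cross}^\star,\qquad l_{1,\rm cross}^\star=\frac{(I-\gamma_1(P_1^\mu)^\top)^{-1}(I-\Pi_\mu)^\top(\rho_2\odot l_2^\star)}{\rho_1}.$$ Consequently $\|l_2^\star\|_\infty\le\frac{\kappa_2}{1-\gamma_2}B_{Q2}$, $\|l_{1,\rm mod}^\star\|_\infty\le\frac{\kappa_1}{1-\gamma_1}B_{Q1}$, and $$\|l_{1,\rm coup}^\star\|_\infty\le\beta\frac{\kappa_1}{1-\gamma_1}B_{Q1}+\frac{\kappa_1(\kappa_{12}+\kappa_{\mu\mid\pi_{b1}}\kappa_{12}^{\mathcal S})}{(1-\gamma_1)(1-\gamma_2)}B_{Q2}.$$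
   Context: Setup: $\mathcal S,\mathcal A$ finite; functions/measures on $\mathcal S\times\mathcal A$ are vectors; $\odot$ and division are pointwise; $K^\top$ denotes the transpose (Euclidean adjoint) of a linear operator $K$, acting on measures. $\langle f,h\rangle_\rho=\sum\rho fh$. $\rho_1,\rho_2$ are probability distributions on $\mathcal S\times\mathcal A$, $\rho_1^{\mathcal S}$ a distribution on $\mathcal S$, $\pi_{b1}$ a policy. $P_1,P_2$ transition kernels; $\mu$ anchor policy; $(\Pi_\mu q)(s,a)=\sum_{a'}\mu(a'\mid s)q(s,a')$; $(P_1^\mu q)(s,a)=\sum_{s'}P_1(s'\mid s,a)\sum_{a'}\mu(a'\mid s')q(s',a')$; $(P_2^\pi h)(s,a)=\sum_{s'}P_2(s'\mid s,a)\sum_{a'}\pi(a'\mid s')h(s',a')$. $q_1^\star,q_2^\star$ are given functions on $\mathcal S\times\mathcal A$ and $\pi_2^\star$ a given policy. Occupancies (state-action initial distribution): $d^{P_2}_{\pi,\rho_2}:=(1-\gamma_2)\sum_{t\ge0}\gamma_2^t((P_2^{\pi})^\top)^t\rho_2$, $d^{P_1}_{\mu,\rho_1}:=(1-\gamma_1)\sum_{t\ge0}\gamma_1^t((P_1^\mu)^\top)^t\rho_1$, and $d^{P_2,\mathcal S}_{\pi,\rho_2}(s):=\sum_a d^{P_2}_{\pi,\rho_2}(s,a)$. *)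

(* Defs.v *)
From HB Require Import structures.
From mathcomp Require Import all_boot all_order all_algebra.
From mathcomp Require Import all_classical all_reals.
From mathcomp Require Import topology normedtype sequences.
Set Implicit Arguments. Unset Strict Implicit. Unset Printing Implicit Defensive.
Import Order.TTheory GRing.Theory Num.Theory.
Import numFieldNormedType.Exports.
Local Open Scope ring_scope.

Section MDP.
Variables (R : realType) (S A : finType).
Local Notation T := (S * A)%type.

Definition apply (K : T -> T -> R) (f : T -> R) : T -> R :=
  fun x => \sum_(y : T) K x y * f y.

Definition tr (K : T -> T -> R) : T -> T -> R := fun x y => K y x.

Definition idk : T -> T -> R := fun x y => (x == y)%:R.

Definition IminusK (g : R) (K : T -> T -> R) : T -> T -> R :=
  fun x y => idk x y - g * K x y.

Definition mx_of (K : T -> T -> R) : 'M[R]_#|{: S * A}| :=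
  \matrix_(i, j) K (enum_val i) (enum_val j).
Definition op_of (M : 'M[R]_#|{: S * A}|) : T -> T -> R :=
  fun x y => M (enum_rank x) (enum_rank y).
Definition opinv (K : T -> T -> R) : T -> T -> R := op_of (invmx (mx_of K)).

(* (P^pi h)(s,a) = sum_{s'} P(s'|s,a) sum_{a'} pi(a'|s') h(s',a');
   P s a s' = P(s'|s,a), pi s a = pi(a|s). *)
Definition Ppi (P : S -> A -> S -> R) (pi : S -> A -> R) : T -> T -> R :=
  fun x y => P x.1 x.2 y.1 * pi y.1 y.2.

(* (Pi_mu q)(s,a) = sum_{a'} mu(a'|s) q(s,a') *)
Definition Pimu (mu : S -> A -> R) : T -> T -> R :=
  fun x y => (x.1 == y.1)%:R * mu y.1 y.2.

Definition inner (rho f h : T -> R) : R := \sum_(x : T) rho x * f x * h x.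

Definition sup_norm (f : T -> R) : R := \big[Num.max/0]_(x : T) `|f x|.

Definition pw_mul (f g : T -> R) : T -> R := fun x => f x * g x.
Definition pw_div (f g : T -> R) : T -> R := fun x => f x / g x.

Definition occupancy (g : R) (K : T -> T -> R) (rho : T -> R) : T -> R :=
  fun x => (1 - g) * limn (series (fun t : nat => g ^+ t * iter t (apply (tr K)) rho x)).

Definition occupancyS (g : R) (K : T -> T -> R) (rho : T -> R) : S -> R :=
  fun s => \sum_(a : A) occupancy g K rho (s, a).

Definition is_policy (pi : S -> A -> R) : Prop :=
  (forall s a, 0 <= pi s a) /\ (forall s, \sum_(a : A) pi s a = 1).

Definition is_kernel (P : S -> A -> S -> R) : Prop :=
  (forall s a s', 0 <= P s a s') /\ (forall s a, \sum_(s' : S) P s a s' = 1).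

End MDP.

(* Main.v *)
Require Import Defs.
From HB Require Import structures.
From mathcomp Require Import all_boot all_order all_algebra.
From mathcomp Require Import all_classical all_reals.
From mathcomp Require Import topology normedtype sequences.
From mathcomp Require Import ring lra.
Import Order.TTheory GRing.Theory Num.Theory.
Import numFieldNormedType.Exports.
Local Open Scope ring_scope.

Section Aux.
Variables (R : realType) (S A : finType).
Local Notation T := (S * A)%type.

Local Notation opm M := (@op_of R S A M).

Definition colv (f : T -> R) : 'cV[R]_#|{: S * A}| := \col_i f (enum_val i).

Lemma sum_enum (F : T -> R) : \sum_(y : T) F y = \sum_(j < #|{: S * A}|) F (enum_val j).
Proof.
rewrite (reindex (fun j : 'I_#|{: S * A}| => (enum_val j : T))) //.
by apply: onW_bij; apply: enum_val_bij.
Qed.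

Lemma apply_opE (M : 'M[R]_#|{: S * A}|) f x :
  apply (opm M) f x = (M *m colv f) (enum_rank x) 0.
Proof.
rewrite /apply /op_of mxE sum_enum; apply: eq_bigr => j _.
by rewrite mxE enum_valK.
Qed.

Lemma mx_ofK (K : T -> T -> R) : op_of (mx_of K) = K.
Proof. by apply/funext => x; apply/funext => y; rewrite /op_of mxE !enum_rankK. Qed.

Lemma colv_apply M f : colv (apply (opm M) f) = M *m colv f.
Proof.
apply/matrixP => i j; rewrite [j]ord1 mxE apply_opE enum_valK.
by [].
Qed.

Lemma apply_comp M N f :
  apply (opm M) (apply (opm N) f) = apply (opm (M *m N)) f.
Proof. by apply/funext => x; rewrite !apply_opE colv_apply mulmxA. Qed.

Lemma apply_id1 f : apply (opm 1%:M) f = f.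
Proof. by apply/funext => x; rewrite apply_opE mul1mx mxE enum_rankK. Qed.

Lemma applyD (K : T -> T -> R) f g x :
  apply K (fun y => f y + g y) x = apply K f x + apply K g x.
Proof. by rewrite /apply -big_split; apply: eq_bigr => y _; rewrite mulrDr. Qed.

Lemma applyB (K : T -> T -> R) f g x :
  apply K (fun y => f y - g y) x = apply K f x - apply K g x.
Proof. by rewrite /apply -sumrB; apply: eq_bigr => y _; rewrite mulrBr. Qed.

Lemma applyZ (K : T -> T -> R) c f x :
  apply K (fun y => c * f y) x = c * apply K f x.
Proof. by rewrite /apply mulr_sumr; apply: eq_bigr => y _; rewrite mulrCA. Qed.

Lemma apply0 (K : T -> T -> R) x : apply K (fun _ => 0) x = 0.
Proof. by rewrite /apply big1 // => y _; rewrite mulr0. Qed.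

Lemma tr_IminusK (g : R) (K : T -> T -> R) : tr (IminusK g K) = IminusK g (tr K).
Proof. by apply/funext => x; apply/funext => y; rewrite /tr /IminusK /idk eq_sym. Qed.

Lemma sum_idk (f : T -> R) y : \sum_(z : T) f z * idk R z y = f y.
Proof.
rewrite (bigD1 y) //= /idk eqxx mulr1 big1 ?addr0 // => z /negbTE ->.
by rewrite mulr0.
Qed.

Lemma sum_idk' (f : T -> R) y : \sum_(z : T) idk R y z * f z = f y.
Proof.
rewrite (bigD1 y) //= /idk eqxx mul1r big1 ?addr0 // => z.
by rewrite eq_sym => /negbTE ->; rewrite mul0r.
Qed.

Lemma apply_IminusK (g : R) (K : T -> T -> R) (f : T -> R) x : apply (IminusK g K) f x = f x - g * apply K f x.
Proof.
rewrite /apply /IminusK.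
under eq_bigr do rewrite mulrBl.
by rewrite sumrB sum_idk' mulr_sumr; congr (_ - _); apply: eq_bigr => y _; rewrite mulrA.
Qed.

Lemma inner_apply (rho l : T -> R) (M : T -> T -> R) (h : T -> R) :
  inner rho l (apply M h) = \sum_(y : T) apply (tr M) (pw_mul rho l) y * h y.
Proof.
rewrite /inner /apply.
under eq_bigr do rewrite mulr_sumr.
rewrite exchange_big; apply: eq_bigr => y _; rewrite mulr_suml.
by apply: eq_bigr => x _; rewrite /tr /pw_mul; ring.
Qed.

Lemma fun_ext_sum (f g : T -> R) :
  (forall h : T -> R, \sum_y f y * h y = \sum_y g y * h y) -> f = g.
Proof.
move=> H; apply/funext => y.
by have := H (fun z => idk R z y); rewrite !sum_idk.
Qed.

Section Stoch.
Variable K : T -> T -> R.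
Hypothesis Kpos : forall x y, 0 <= K x y.
Hypothesis Ksum : forall x, \sum_y K x y = 1.

Lemma sup_ge0 (f : T -> R) : 0 <= sup_norm f.
Proof.
rewrite /sup_norm; apply: (big_ind (fun x => 0 <= x)) => //.
by move=> a b ha hb; rewrite le_max ha.
Qed.

Lemma le_sup (f : T -> R) x : `|f x| <= sup_norm f.
Proof. exact: le_bigmax. Qed.

Lemma sup_le (f : T -> R) c : 0 <= c -> (forall x, `|f x| <= c) -> sup_norm f <= c.
Proof. by move=> c0 H; apply: bigmax_le. Qed.

Lemma maxprinc (g : R) (v : T -> R) : 0 <= g < 1 -> (forall y, v y = g * apply K v y) -> forall y, v y = 0.
Proof.
move=> /andP[g0 g1] Hv.
set m := sup_norm v.
have m0 : 0 <= m := sup_ge0 v.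
have Hm : m <= g * m.
  apply: sup_le; first exact: mulr_ge0.
  move=> y; rewrite Hv normrM ger0_norm //; apply: ler_wpM2l => //.
  rewrite /apply; apply: le_trans (ler_norm_sum _ _ _) _.
  apply: le_trans (_ : \sum_z K y z * m <= _).
    apply: ler_sum => z _; rewrite normrM ger0_norm //.
    by apply: ler_wpM2l => //; apply: le_sup.
  by rewrite -mulr_suml Ksum mul1r.
have m00 : m <= 0 by nra.
move=> y; apply/eqP; rewrite -normr_le0; apply: le_trans m00; exact: le_sup.
Qed.


Variable g : R.
Hypothesis hg : 0 <= g < 1.
Local Notation M := (IminusK g (tr K)).
Local Notation Minv := (opinv M).

Lemma unitM : mx_of M \in unitmx.
Proof.
rewrite -row_free_unit -kermx_eq0; apply/eqP/row_matrixP => i; rewrite row0.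
set r := row i (kermx (mx_of M)).
have hr : r *m mx_of M = 0 by rewrite /r -row_mul mulmx_ker row0.
apply/rowP => j; rewrite !mxE.
pose v := fun y : T => r 0 (enum_rank y).
have hv : forall y, v y = g * apply K v y.
  move=> y; have := congr1 (fun B : 'M[R]_(1, #|{: S * A}|) => B 0 (enum_rank y)) hr; rewrite !mxE.
  under eq_bigr do rewrite mxE.
  move=> H0.
  have : \sum_(z : T) v z * M z y = 0.
    apply: eq_trans _ H0; rewrite sum_enum; apply: eq_bigr => i0 _.
    by rewrite /v /r !mxE enum_valK enum_rankK.
  rewrite /IminusK /tr.
  under eq_bigr do rewrite mulrBr.
  rewrite sumrB sum_idk /apply mulr_sumr => /eqP; rewrite subr_eq0 => /eqP ->.
  by apply: eq_bigr => z _; ring.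
by have := (@maxprinc g v hg hv) (enum_val j); rewrite /v /r !mxE enum_valK.
Qed.

Lemma MMinv v : apply M (apply Minv v) = v.
Proof. by rewrite /opinv -{1}(mx_ofK M) apply_comp mulmxV ?unitM // apply_id1. Qed.

Lemma MinvM w : apply Minv (apply M w) = w.
Proof. by rewrite /opinv -{2}(mx_ofK M) apply_comp mulVmx ?unitM // apply_id1. Qed.

End Stoch.

Lemma cvg_geo (g c B : R) (u : nat -> R) : 0 <= g < 1 ->
  (forall n, `|u n - c| <= g ^+ n * B) -> (u @ \oo --> c)%classic.
Proof.
move=> /andP[g0 g1] H.
have E : ((fun n => g ^+ n * B) @ \oo --> 0)%classic.
  have := cvgM (cvg_expr (_ : `|g| < 1)) (cvg_cst B); rewrite mul0r; apply.
  by rewrite ger0_norm.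
apply: (squeeze_cvgr (f := fun n => c - g ^+ n * B) (h := fun n => c + g ^+ n * B)).
- apply: nearW => n; have := H n; rewrite ler_norml => /andP[h1 h2].
  by apply/andP; split; lra.
- by have := cvgD (cvg_cst c) (cvgN E); rewrite oppr0 addr0; apply.
- by have := cvgD (cvg_cst c) E; rewrite addr0; apply.
Qed.

Definition zit (K : T -> T -> R) (v : T -> R) n := iter n (apply (tr K)) v.

Section Neu.
Variable K : T -> T -> R.
Hypothesis Kpos : forall x y, 0 <= K x y.
Hypothesis Ksum : forall x, \sum_y K x y = 1.
Variable g : R.
Hypothesis hg : 0 <= g < 1.
Local Notation M := (IminusK g (tr K)).
Local Notation Minv := (opinv M).

Section V.
Variable v : T -> R.
Local Notation z := (zit K v).

Lemma z_sum n : \sum_y `|z n y| <= \sum_y `|v y|.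
Proof.
elim: n => [|n IH] /=; first exact: lexx.
apply: le_trans IH; rewrite /zit /= /apply /tr.
apply: le_trans (_ : \sum_y \sum_w K w y * `|iter n (apply (tr K)) v w| <= _).
  apply: ler_sum => y _; apply: le_trans (ler_norm_sum _ _ _) _.
  by apply: ler_sum => w _; rewrite normrM (ger0_norm (Kpos _ _)).
rewrite exchange_big /=; apply: ler_sum => w _.
by rewrite -mulr_suml Ksum mul1r.
Qed.

Lemma z_bound n y : `|z n y| <= \sum_w `|v w|.
Proof.
apply: le_trans (z_sum n).
by rewrite (bigD1 y) //= lerDl sumr_ge0.
Qed.

Lemma z_ge0 n y : (forall w, 0 <= v w) -> 0 <= z n y.
Proof.
move=> hv; elim: n y => [|n IH] y //=.
rewrite /zit /= /apply; apply: sumr_ge0 => w _; apply: mulr_ge0.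
  exact: Kpos.
exact: IH.
Qed.

Lemma sE n x : series (fun t => g ^+ t * z t x) n = \sum_(0 <= t < n) g ^+ t * z t x.
Proof. by rewrite seriesEnat. Qed.

Lemma Ms n x : apply M (fun x => \sum_(0 <= t < n) g ^+ t * z t x) x = v x - g ^+ n * z n x.
Proof.
elim: n x => [|n IH] x.
  have -> : (fun x => \sum_(0 <= t < 0) g ^+ t * z t x) = fun=> 0.
    by apply/funext => y; rewrite big_geq.
  by rewrite apply0 expr0 mul1r /zit /= subrr.
have -> : (fun x => \sum_(0 <= t < n.+1) g ^+ t * z t x)
        = fun x => (\sum_(0 <= t < n) g ^+ t * z t x) + g ^+ n * z n x.
  by apply/funext => y; rewrite big_nat_recr.
rewrite (applyD M (fun x => \sum_(0 <= t < n) g ^+ t * z t x) (fun x => g ^+ n * z n x)).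
rewrite (applyZ M (g ^+ n) (z n)) IH apply_IminusK.
have -> : z n.+1 x = apply (tr K) (z n) x by [].
rewrite exprSr; ring.
Qed.

Lemma sform n x : \sum_(0 <= t < n) g ^+ t * z t x
  = apply Minv v x - g ^+ n * apply Minv (z n) x.
Proof.
have H : (fun x => \sum_(0 <= t < n) g ^+ t * z t x)
       = apply Minv (apply M (fun x => \sum_(0 <= t < n) g ^+ t * z t x)).
  by rewrite MinvM.
have H2 : apply M (fun x => \sum_(0 <= t < n) g ^+ t * z t x)
        = fun x => v x - g ^+ n * z n x.
  by apply/funext => y; rewrite Ms.
rewrite H2 in H.
by rewrite (congr1 (fun f => f x) H) applyB applyZ.
Qed.

Lemma Minvz_bound n x :
  `|apply Minv (z n) x| <= \sum_y `|Minv x y| * \sum_w `|v w|.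
Proof.
rewrite {1}/apply; apply: le_trans (ler_norm_sum _ _ _) _.
apply: ler_sum => y _; rewrite normrM; apply: ler_wpM2l => //.
exact: z_bound.
Qed.

Lemma cvgMinv x :
  ((fun n => series (fun t => g ^+ t * z t x) n) @ \oo --> apply Minv v x)%classic.
Proof.
apply: (@cvg_geo g _ (\sum_y `|Minv x y| * \sum_w `|v w|) _ hg) => n.
rewrite sE sform addrAC subrr add0r normrN normrM.
case/andP: hg => g0 _.
rewrite (ger0_norm (exprn_ge0 _ g0)); apply: ler_wpM2l; first exact: exprn_ge0.
exact: Minvz_bound.
Qed.

Lemma limE x :
  limn (series (fun t => g ^+ t * iter t (apply (tr K)) v x)) = apply Minv v x.
Proof. exact: (cvg_lim (@Rhausdorff R) (cvgMinv x)). Qed.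

Lemma Minv_ge0 x : (forall w, 0 <= v w) -> 0 <= apply Minv v x.
Proof.
move=> hv; rewrite -limE; apply: limr_ge; first exact: cvgP (cvgMinv x).
apply: nearW => n; rewrite sE; apply: sumr_ge0 => t _; apply: mulr_ge0.
  by case/andP: hg => g0 _; exact: exprn_ge0.
exact: z_ge0.
Qed.

End V.

Lemma Minv_le (v1 v2 : T -> R) x : (forall w, v1 w <= v2 w) ->
  apply Minv v1 x <= apply Minv v2 x.
Proof.
move=> H; have := @Minv_ge0 (fun w => v2 w - v1 w) x.
by rewrite applyB subr_ge0; apply => w; rewrite subr_ge0.
Qed.

Lemma Minv_abs (v : T -> R) x : `|apply Minv v x| <= apply Minv (fun w => `|v w|) x.
Proof.
have H1 := @Minv_ge0 (fun w => `|v w| + v w) x.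
have H2 := @Minv_ge0 (fun w => `|v w| - v w) x.
rewrite applyD in H1; rewrite applyB in H2.
have : 0 <= apply Minv (fun w => `|v w|) x + apply Minv v x.
  apply: H1 => w; have h1 := ler_norm (- v w); rewrite normrN in h1; lra.
have : 0 <= apply Minv (fun w => `|v w|) x - apply Minv v x.
  apply: H2 => w; have h1 := ler_norm (v w); lra.
by move=> ha hb; rewrite ler_norml; apply/andP; split; lra.
Qed.

Lemma Minv_bound (f rho : T -> R) (c : R) x : (forall w, `|f w| <= c * rho w) ->
  `|apply Minv f x| <= c * apply Minv rho x.
Proof.
move=> H; apply: le_trans (Minv_abs f x) _.
by rewrite -applyZ; apply: Minv_le.
Qed.

Lemma occE (rho : T -> R) x : occupancy g K rho x = (1 - g) * apply Minv rho x.
Proof. by rewrite /occupancy limE. Qed.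

End Neu.
End Aux.
Section Aux2.
Variables (R : realType) (S A : finType).
Local Notation T := (S * A)%type.

Lemma Ppi_pos (P : S -> A -> S -> R) pi : is_kernel P -> is_policy pi ->
  forall x y, 0 <= Ppi P pi x y.
Proof. by move=> [hP _] [hpi _] x y; rewrite /Ppi mulr_ge0. Qed.

Lemma Ppi_sum (P : S -> A -> S -> R) pi : is_kernel P -> is_policy pi ->
  forall x, \sum_y Ppi P pi x y = 1.
Proof.
move=> [_ hP] [_ hpi] x; rewrite /Ppi.
rewrite -(pair_bigA _ (fun s a => P x.1 x.2 s * pi s a)) /=.
under eq_bigr do rewrite -mulr_sumr hpi mulr1.
exact: hP.
Qed.

Lemma sum_fiber (F : T -> R) s : \sum_(z : T) (z.1 == s)%:R * F z = \sum_(a : A) F (s, a).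
Proof.
transitivity (\sum_(p : T) (p.1 == s)%:R * F (p.1, p.2)).
  by apply: eq_bigr => -[a b] _.
rewrite -(pair_bigA _ (fun s' a => (s' == s)%:R * F (s', a))) /=.
rewrite (bigD1 s) //= eqxx.
under eq_bigr do rewrite mul1r.
rewrite [X in _ + X]big1 ?addr0 //.
move=> s' /negbTE hs; apply: big1 => a _; by rewrite hs mul0r.
Qed.

Lemma eq_char (rho l rhs : T -> R) (N : T -> T -> R) :
  (forall h, inner rho l (apply N h) = \sum_y rhs y * h y) <->
  apply (tr N) (pw_mul rho l) = rhs.
Proof.
split=> [H|H h]; last by rewrite inner_apply H.
by apply: fun_ext_sum => h; have := H h; rewrite inner_apply.
Qed.

Lemma pw_mulK (rho w : T -> R) : (forall x, 0 < rho x) -> pw_mul rho (pw_div w rho) = w.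
Proof.
move=> hp; apply/funext => x; rewrite /pw_mul /pw_div mulrC mulfVK //.
exact: lt0r_neq0.
Qed.

Lemma pw_divK (rho l : T -> R) : (forall x, 0 < rho x) -> pw_div (pw_mul rho l) rho = l.
Proof.
move=> hp; apply/funext => x; rewrite /pw_mul /pw_div mulrC mulKf //.
exact: lt0r_neq0.
Qed.

Section Solve.
Variable K : T -> T -> R.
Hypothesis Kpos : forall x y, 0 <= K x y.
Hypothesis Ksum : forall x, \sum_y K x y = 1.
Variable g : R.
Hypothesis hg : 0 <= g < 1.
Variable rho : T -> R.
Hypothesis hrho : forall x, 0 < rho x.

Lemma solve (l rhs : T -> R) :
  (forall h, inner rho l (apply (IminusK g K) h) = \sum_y rhs y * h y) <->
  l = pw_div (apply (opinv (IminusK g (tr K))) rhs) rho.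
Proof.
rewrite eq_char tr_IminusK; split => [H|->].
  by rewrite -H MinvM // pw_divK.
by rewrite pw_mulK // MMinv.
Qed.

Lemma main_bound (f : T -> R) (c kappa : R) x : 0 <= c ->
  sup_norm (pw_div (occupancy g K rho) rho) <= kappa ->
  (forall w, `|f w| <= c * rho w) ->
  `|pw_div (apply (opinv (IminusK g (tr K))) f) rho x| <= kappa / (1 - g) * c.
Proof.
move=> c0 hk hf; case/andP: (hg) => g0 g1.
have d0 : 0 < 1 - g by rewrite subr_gt0.
rewrite /pw_div normrM normfV (gtr0_norm (hrho x)) ler_pdivrMr //.
apply: le_trans (@Minv_bound R S A K Kpos Ksum g hg f rho c x hf) _.
have ho : occupancy g K rho x <= kappa * rho x.
  rewrite -ler_pdivrMr //; apply: le_trans (ler_norm _) _.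
  exact: le_trans (@le_sup R S A _ x) hk.
have hm : apply (opinv (IminusK g (tr K))) rho x = occupancy g K rho x / (1 - g).
  by rewrite (@occE R S A K Kpos Ksum g hg) mulrAC divff ?mul1r // lt0r_neq0.
rewrite hm.
have -> : kappa / (1 - g) * c * rho x = c * ((kappa * rho x) / (1 - g)) by ring.
apply: ler_wpM2l => //; apply: ler_wpM2r => //.
by rewrite invr_ge0 ltW.
Qed.

Lemma occ_ge0 x : 0 <= occupancy g K rho x.
Proof.
case/andP: (hg) => g0 g1.
rewrite (@occE R S A K Kpos Ksum g hg); apply: mulr_ge0; first by rewrite subr_ge0 ltW.
by apply: Minv_ge0 => // w; apply: ltW.
Qed.

End Solve.
End Aux2.

Theorem proposition3p4 (R : realType) (S A : finType)
  (rho1 rho2 : S * A -> R) (rho1S : S -> R) (pib1 : S -> A -> R)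
  (P1 P2 : S -> A -> S -> R) (mu pi2 : S -> A -> R) (q1 q2 : S * A -> R)
  (gamma1 gamma2 beta BQ1 BQ2 kappa1 kappa2 kappa12 kappamu kappa12S : R) :
  (* probability distributions, kernels, policies *)
  \sum_(x : S * A) rho1 x = 1 -> \sum_(x : S * A) rho2 x = 1 ->
  (forall s, 0 <= rho1S s) -> \sum_(s : S) rho1S s = 1 ->
  is_policy pib1 -> is_policy mu -> is_policy pi2 ->
  is_kernel P1 -> is_kernel P2 ->
  (* standing assumptions *)
  (forall x, 0 < rho1 x) -> (forall x, 0 < rho2 x) ->
  (forall s a, rho1 (s, a) = rho1S s * pib1 s a) ->
  0 <= gamma1 < 1 -> 0 <= gamma2 < 1 -> 0 <= beta ->
  sup_norm q1 <= BQ1 -> sup_norm q2 <= BQ2 ->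
  sup_norm (pw_div (occupancy gamma2 (Ppi P2 pi2) rho2) rho2) <= kappa2 ->
  sup_norm (pw_div (occupancy gamma1 (Ppi P1 mu) rho1) rho1) <= kappa1 ->
  sup_norm (pw_div (occupancy gamma2 (Ppi P2 pi2) rho2) rho1) <= kappa12 ->
  sup_norm (fun x : S * A => mu x.1 x.2 / pib1 x.1 x.2) <= kappamu ->
  \big[Num.max/0]_(s : S)
     `|occupancyS gamma2 (Ppi P2 pi2) rho2 s / rho1S s| <= kappa12S ->
  let K2 := Ppi P2 pi2 in
  let K1 := Ppi P1 mu in
  let eq2 (l2 : S * A -> R) := forall h : S * A -> R,
    inner rho2 l2 (apply (IminusK gamma2 K2) h) = inner rho2 q2 h in
  let eq1mod (l1 : S * A -> R) := forall h : S * A -> R,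
    inner rho1 l1 (apply (IminusK gamma1 K1) h) = inner rho1 q1 h in
  let eq1coup (l2 l1 : S * A -> R) := forall h : S * A -> R,
    inner rho1 l1 (apply (IminusK gamma1 K1) h)
    = beta * inner rho1 q1 h + inner rho2 l2 (apply (IminusK 1 (Pimu mu)) h) in
  let l2f := pw_div (apply (opinv (IminusK gamma2 (tr K2))) (pw_mul rho2 q2)) rho2 in
  let l1modf := pw_div (apply (opinv (IminusK gamma1 (tr K1))) (pw_mul rho1 q1)) rho1 in
  let l1crossf := pw_div (apply (opinv (IminusK gamma1 (tr K1)))
                     (apply (tr (IminusK 1 (Pimu mu))) (pw_mul rho2 l2f))) rho1 in
  (* existence *)
  (exists l2 l1mod l1coup, [/\ eq2 l2, eq1mod l1mod & eq1coup l2 l1coup]) /\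
  (* uniqueness, closed forms and bounds *)
  (forall l2 l1mod l1coup, eq2 l2 -> eq1mod l1mod -> eq1coup l2 l1coup ->
    [/\ l2 = l2f, l1mod = l1modf,
        l1coup = (fun x => beta * l1modf x + l1crossf x) &
      [/\ sup_norm l2 <= kappa2 / (1 - gamma2) * BQ2,
        sup_norm l1mod <= kappa1 / (1 - gamma1) * BQ1 &
        sup_norm l1coup <= beta * (kappa1 / (1 - gamma1)) * BQ1
          + kappa1 * (kappa12 + kappamu * kappa12S)
            / ((1 - gamma1) * (1 - gamma2)) * BQ2]]).
Proof.
move=> hr1 hr2 hS0 hS1 hpb hmu hpi hP1 hP2 r1pos r2pos hr1S hg1 hg2 b0 hq1 hq2
  hk2 hk1 hk12 hkmu hk12S K2 K1 eq2 eq1mod eq1coup l2f l1modf l1crossf.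
have K2pos := @Ppi_pos R S A P2 pi2 hP2 hpi.
have K2sum := @Ppi_sum R S A P2 pi2 hP2 hpi.
have K1pos := @Ppi_pos R S A P1 mu hP1 hmu.
have K1sum := @Ppi_sum R S A P1 mu hP1 hmu.
pose N := IminusK 1 (Pimu mu).
have S2 : forall l, eq2 l <-> l = l2f.
  move=> l; exact: (@solve R S A K2 K2pos K2sum gamma2 hg2 rho2 r2pos l (pw_mul rho2 q2)).
have S1 : forall l, eq1mod l <-> l = l1modf.
  move=> l; exact: (@solve R S A K1 K1pos K1sum gamma1 hg1 rho1 r1pos l (pw_mul rho1 q1)).
have Sc : forall l2 l, eq1coup l2 l <-> l = pw_div (apply (opinv (IminusK gamma1 (tr K1)))
      (fun y => beta * pw_mul rho1 q1 y + apply (tr N) (pw_mul rho2 l2) y)) rho1.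
  move=> l2 l; rewrite -(@solve R S A K1 K1pos K1sum gamma1 hg1 rho1 r1pos).
  have E : forall h, beta * inner rho1 q1 h + inner rho2 l2 (apply N h)
     = \sum_y (beta * pw_mul rho1 q1 y + apply (tr N) (pw_mul rho2 l2) y) * h y.
    move=> h; rewrite inner_apply /inner mulr_sumr -big_split; apply: eq_bigr => y _.
    by rewrite /= mulrDl !mulrA.
  by split => H h; rewrite H E.
have Ecoup : pw_div (apply (opinv (IminusK gamma1 (tr K1)))
      (fun y => beta * pw_mul rho1 q1 y + apply (tr N) (pw_mul rho2 l2f) y)) rho1
    = fun x => beta * l1modf x + l1crossf x.
  apply/funext => x; rewrite /pw_div.
  rewrite (@applyD R S A _ (fun y => beta * pw_mul rho1 q1 y) (fun y => apply (tr N) (pw_mul rho2 l2f) y)).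
  rewrite (@applyZ R S A _ beta (pw_mul rho1 q1)).
  by rewrite /l1modf /l1crossf /pw_div mulrDl mulrA.
split.
  exists l2f, l1modf, (fun x => beta * l1modf x + l1crossf x).
  split; first exact/S2.
    exact/S1.
  by apply/Sc; rewrite Ecoup.
move=> l2 l1 lc H2 H1 Hc.
have e2 := (S2 l2).1 H2; have e1 := (S1 l1).1 H1; have ec := (Sc l2 lc).1 Hc.
subst l2; rewrite Ecoup in ec; subst l1 lc.
case/andP: (hg1) => g10 g11; case/andP: (hg2) => g20 g21.
have d1 : 0 < 1 - gamma1 by rewrite subr_gt0.
have d2 : 0 < 1 - gamma2 by rewrite subr_gt0.
have bq1 : 0 <= BQ1 := le_trans (@sup_ge0 R S A q1) hq1.
have bq2 : 0 <= BQ2 := le_trans (@sup_ge0 R S A q2) hq2.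
have k1 : 0 <= kappa1 := le_trans (@sup_ge0 R S A _) hk1.
have k2 : 0 <= kappa2 := le_trans (@sup_ge0 R S A _) hk2.
have k12 : 0 <= kappa12 := le_trans (@sup_ge0 R S A _) hk12.
have kmu : 0 <= kappamu := le_trans (@sup_ge0 R S A _) hkmu.
have k12S : 0 <= kappa12S.
  apply: le_trans hk12S; apply: (big_ind (fun x => 0 <= x)) => //.
  by move=> a b ha hb; rewrite le_max ha.
have hq (rho q : S * A -> R) BQ : (forall x, 0 < rho x) -> sup_norm q <= BQ ->
    forall w, `|pw_mul rho q w| <= BQ * rho w.
  move=> hp hqq w; rewrite /pw_mul normrM (gtr0_norm (hp w)) mulrC.
  apply: ler_wpM2r; first exact: ltW.
  exact: le_trans (@le_sup R S A q w) hqq.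
have B2 : forall x, `|l2f x| <= kappa2 / (1 - gamma2) * BQ2.
  move=> x; apply: (@main_bound R S A K2 K2pos K2sum gamma2 hg2 rho2 r2pos) => //.
  exact: hq.
have B1 : forall x, `|l1modf x| <= kappa1 / (1 - gamma1) * BQ1.
  move=> x; apply: (@main_bound R S A K1 K1pos K1sum gamma1 hg1 rho1 r1pos) => //.
  exact: hq.
pose e := BQ2 / (1 - gamma2).
have e0 : 0 <= e by rewrite /e divr_ge0 // ltW.
pose occ2 := occupancy gamma2 K2 rho2.
pose W := pw_mul rho2 l2f.
have hW : forall z, `|W z| <= e * occ2 z.
  move=> z; rewrite /W /l2f pw_mulK //.
  apply: le_trans (@Minv_bound R S A K2 K2pos K2sum gamma2 hg2 _ rho2 BQ2 z (hq _ _ _ r2pos hq2)) _.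
  rewrite /occ2 (@occE R S A K2 K2pos K2sum gamma2 hg2 rho2 z) /e.
  have -> : BQ2 / (1 - gamma2) * ((1 - gamma2) * apply (opinv (IminusK gamma2 (tr K2))) rho2 z)
     = BQ2 * apply (opinv (IminusK gamma2 (tr K2))) rho2 z * ((1 - gamma2) / (1 - gamma2)) by ring.
  by rewrite divff ?mulr1 // lt0r_neq0.
have occ0 : forall z, 0 <= occ2 z.
  by move=> z; apply: (@occ_ge0 R S A K2 K2pos K2sum gamma2 hg2 rho2 r2pos).
pose c := (kappa12 + kappamu * kappa12S) * e.
have c0 : 0 <= c by rewrite /c mulr_ge0 // addr_ge0 // mulr_ge0.
have hv : forall w, `|apply (tr N) W w| <= c * rho1 w.
  move=> [s a].
  have ps : rho1S s != 0.
    apply/eqP => E0; have := r1pos (s, a); by rewrite hr1S E0 mul0r ltxx.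
  have pa : pib1 s a != 0.
    apply/eqP => E0; have := r1pos (s, a); by rewrite hr1S E0 mulr0 ltxx.
  have ps' : 0 < rho1S s by rewrite lt0r ps hS0.
  have pa' : 0 < pib1 s a by rewrite lt0r pa; case: hpb => hp _; exact: hp.
  have mu0 : 0 <= mu s a by case: hmu => hm _; exact: hm.
  have E1 : apply (tr N) W (s, a) = W (s, a) - mu s a * \sum_(a' : A) W (s, a').
    rewrite /N tr_IminusK apply_IminusK mul1r -sum_fiber; congr (_ - _).
    rewrite /apply /tr /Pimu mulr_sumr; apply: eq_bigr => z _ /=; ring.
  have h1 : occ2 (s, a) <= kappa12 * rho1 (s, a).
    rewrite -ler_pdivrMr //; apply: le_trans (ler_norm _) _.
    exact: le_trans (@le_sup R S A (pw_div (occupancy gamma2 (Ppi P2 pi2) rho2) rho1) (s, a)) hk12.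
  have hm : mu s a <= kappamu * pib1 s a.
    rewrite -ler_pdivrMr //; apply: le_trans (ler_norm _) _.
    exact: le_trans (@le_sup R S A (fun x : S * A => mu x.1 x.2 / pib1 x.1 x.2) (s, a)) hkmu.
  have hS : occupancyS gamma2 (Ppi P2 pi2) rho2 s <= kappa12S * rho1S s.
    rewrite -ler_pdivrMr //; apply: le_trans (ler_norm _) _.
    apply: le_trans hk12S.
    exact: (le_bigmax _ (fun s => `|occupancyS gamma2 (Ppi P2 pi2) rho2 s / rho1S s|) s).
  have oS0 : 0 <= occupancyS gamma2 (Ppi P2 pi2) rho2 s.
    by apply: sumr_ge0 => a' _; exact: occ0.
  have h2 : mu s a * occupancyS gamma2 (Ppi P2 pi2) rho2 s
      <= kappamu * pib1 s a * (kappa12S * rho1S s) by apply: ler_pM.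
  have hsum : `|\sum_(a' : A) W (s, a')| <= e * occupancyS gamma2 (Ppi P2 pi2) rho2 s.
    apply: le_trans (ler_norm_sum _ _ _) _.
    rewrite /occupancyS mulr_sumr; apply: ler_sum => a' _; exact: hW.
  rewrite E1; apply: le_trans (ler_normB _ _) _.
  rewrite [X in _ + X]normrM (ger0_norm mu0).
  apply: le_trans (lerD (hW (s, a)) (ler_wpM2l mu0 hsum)) _.
  have i1 := ler_wpM2l e0 h1; have i2 := ler_wpM2l e0 h2.
  have -> : mu s a * (e * occupancyS gamma2 (Ppi P2 pi2) rho2 s)
     = e * (mu s a * occupancyS gamma2 (Ppi P2 pi2) rho2 s) by ring.
  apply: le_trans (lerD i1 i2) _.
  by rewrite hr1S /c le_eqVlt; apply/orP; left; apply/eqP; ring.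
have Bc : forall x, `|l1crossf x| <= kappa1 / (1 - gamma1) * c.
  move=> x; exact: (@main_bound R S A K1 K1pos K1sum gamma1 hg1 rho1 r1pos _ c kappa1 x c0 hk1 hv).
split => //; split.
- by apply: sup_le => //; rewrite mulr_ge0 // divr_ge0 // ltW.
- by apply: sup_le => //; rewrite mulr_ge0 // divr_ge0 // ltW.
- have -> : kappa1 * (kappa12 + kappamu * kappa12S) / ((1 - gamma1) * (1 - gamma2)) * BQ2
      = kappa1 / (1 - gamma1) * c by rewrite /c /e invfM; ring.
  apply: sup_le.
    apply: addr_ge0; first by rewrite mulr_ge0 // mulr_ge0 // divr_ge0 // ltW.
    by rewrite mulr_ge0 // divr_ge0 // ltW.
  move=> x; apply: le_trans (ler_normD _ _) _; rewrite normrM (ger0_norm b0).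
  apply: lerD => //; rewrite -mulrA; exact: ler_wpM2l.
Qed.
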